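(* Let $D>0$ be a square-free integer, let $p$ be an odd prime with $\left(\frac{-D}{p}\right)=1$, and let $\alpha\ge 1$ be an integer. Let $x_0,y_0$ be integers with $\gcd(x_0,y_0)=1$ and $x_0^2+Dy_0^2=p^{2\alpha}$. Suppose $c,d$ are integers with $\gcd(c,d)=1$ and $p^{2\alpha}\mid c^2+Dd^2$. Then exactly one of the following holds in $\mathbb{Z}[\sqrt{-D}]$: $x_0+y_0\sqrt{-D}\mid c+d\sqrt{-D}$, or $x_0-y_0\sqrt{-D}\mid c+d\sqrt{-D}$.
   Context: $\left(\frac{\cdot}{p}\right)$ is the Legendre symbol. *)

(* Defs.v *)
From Stdlib Require Import ZArith Znumtheory List.
Open Scope Z_scope.

Definition squarefree (D : Z) : Prop :=
  forall k : Z, (k * k | D) -> Z.abs k = 1.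

Definition legendre (a p : Z) : Z :=
  if a mod p =? 0 then 0
  else if existsb (fun x => (x * x - a) mod p =? 0)
                  (map Z.of_nat (seq 0 (Z.to_nat p)))
       then 1 else -1.

(* Divisibility in Z[sqrt(-D)]: (a + b sqrt(-D)) | (c + d sqrt(-D)) iff
   there is u + v sqrt(-D) in Z[sqrt(-D)] with
   (a + b sqrt(-D)) (u + v sqrt(-D)) = c + d sqrt(-D). *)
Definition zsqrt_divides (D a b c d : Z) : Prop :=
  exists u v : Z, c = a * u - D * b * v /\ d = a * v + b * u.

(* Main.v *)
Require Import Defs.
From Stdlib Require Import ZArith Znumtheory List Lia.
Open Scope Z_scope.

Lemma relp_pow (p a : Z) (n : nat) : rel_prime p a -> rel_prime (p ^ Z.of_nat n) a.
Proof.
  intros H. induction n as [|n IH].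
  - simpl. apply rel_prime_1.
  - rewrite Nat2Z.inj_succ, Z.pow_succ_r by lia.
    apply rel_prime_sym, rel_prime_mult; apply rel_prime_sym; assumption.
Qed.

Lemma relp_powZ (p a e : Z) : 0 <= e -> rel_prime p a -> rel_prime (p ^ e) a.
Proof.
  intros He H. replace e with (Z.of_nat (Z.to_nat e)) by lia. apply relp_pow; auto.
Qed.

Lemma div_iff (D x y c d N : Z) : x^2 + D*y^2 = N -> N <> 0 -> rel_prime N x ->
  (zsqrt_divides D x y c d <-> (N | c*x + D*d*y)).
Proof.
  intros HN HN0 Hr. split.
  - intros [u [v [Hc Hd]]]. exists u. subst c d. rewrite <- HN. ring.
  - intros [k Hk].
    assert (Hm : (N | d*x - c*y)).
    { apply Gauss with x; auto.
      exists (d - y*k). replace (x*(d*x-c*y)) with (d*(x^2 + D*y^2) - y*(c*x+D*d*y)) by ring.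
      rewrite Hk, HN. ring. }
    destruct Hm as [m Hm].
    exists k, m. split.
    + apply Z.mul_reg_l with N; auto.
      replace (N*(x*k - D*y*m)) with (x*(k*N) - D*y*(m*N)) by ring.
      rewrite <- Hk, <- Hm, <- HN. ring.
    + apply Z.mul_reg_l with N; auto.
      replace (N*(x*m + y*k)) with (x*(m*N) + y*(k*N)) by ring.
      rewrite <- Hk, <- Hm, <- HN. ring.
Qed.

Lemma notdiv (p D a b : Z) : prime p -> ~ (p | D) -> Z.gcd a b = 1 ->
  (p | a^2 + D*b^2) -> ~ (p | a).
Proof.
  intros Hp HD Hg H Ha.
  assert (Hb : (p | D * (b*b))).
  { replace (D*(b*b)) with ((a^2 + D*b^2) - a*a) by ring.
    apply Z.divide_sub_r; auto. apply Z.divide_mul_l; auto. }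
  destruct (prime_mult p Hp _ _ Hb) as [H1|H1]; [contradiction|].
  assert (Hb2 : (p | b)) by (destruct (prime_mult p Hp _ _ H1); auto).
  pose proof (Z.gcd_greatest a b p Ha Hb2) as G. rewrite Hg in G.
  apply Z.divide_1_r in G. pose proof (prime_ge_2 p Hp). lia.
Qed.

Theorem lemma3p4 (D p alpha x0 y0 c d : Z) :
  0 < D -> squarefree D ->
  prime p -> p <> 2 -> legendre (- D) p = 1 ->
  1 <= alpha ->
  Z.gcd x0 y0 = 1 -> x0 ^ 2 + D * y0 ^ 2 = p ^ (2 * alpha) ->
  Z.gcd c d = 1 -> (p ^ (2 * alpha) | c ^ 2 + D * d ^ 2) ->
  (zsqrt_divides D x0 y0 c d /\ ~ zsqrt_divides D x0 (- y0) c d) \/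
  (~ zsqrt_divides D x0 y0 c d /\ zsqrt_divides D x0 (- y0) c d).
Proof.
  intros HD _ Hp Hp2 Hleg Ha Hg0 HN Hgc Hdiv.
  pose proof (prime_ge_2 p Hp) as Hp1.
  set (N := p ^ (2*alpha)) in *.
  assert (HpD : ~ (p | D)).
  { intros [k Hk]. unfold legendre in Hleg.
    assert (E : (- D) mod p = 0).
    { rewrite Hk. replace (- (k*p)) with ((-k)*p) by ring. apply Z.mod_mul. lia. }
    rewrite E in Hleg. simpl in Hleg. discriminate. }
  assert (HpN : (p | N)).
  { unfold N. replace (2*alpha) with (Z.succ (2*alpha - 1)) by lia.
    rewrite Z.pow_succ_r by lia. apply Z.divide_mul_l, Z.divide_refl. }
  assert (HN0 : 0 < N) by (unfold N; apply Z.pow_pos_nonneg; lia).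
  assert (Hx0 : ~ (p | x0)).
  { apply (notdiv p D x0 y0); auto. rewrite HN. auto. }
  assert (Hc : ~ (p | c)).
  { apply (notdiv p D c d); auto. eapply Z.divide_trans; eauto. }
  assert (Hr : rel_prime N x0).
  { unfold N. apply relp_powZ; [lia|]. apply prime_rel_prime; auto. }
  assert (HN' : x0^2 + D*(-y0)^2 = N) by (rewrite <- HN; ring).
  pose proof (div_iff D x0 y0 c d N HN ltac:(lia) Hr) as I1.
  pose proof (div_iff D x0 (-y0) c d N HN' ltac:(lia) Hr) as I2.
  set (Ap := c*x0 + D*d*y0) in *.
  assert (E2 : c*x0 + D*d*(-y0) = c*x0 - D*d*y0) by ring.
  rewrite E2 in I2.
  set (Am := c*x0 - D*d*y0) in *.
  assert (Hprod : (N | Ap * Am)).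
  { replace (Ap*Am) with (x0^2 * (c^2 + D*d^2) - D*d^2*N) by (unfold Ap, Am; rewrite <- HN; ring).
    apply Z.divide_sub_r; [apply Z.divide_mul_r; auto | apply Z.divide_mul_r, Z.divide_refl]. }
  assert (Hnb : ~ ((p | Ap) /\ (p | Am))).
  { intros [H1 H2].
    assert (H3 : (p | 2 * (c * x0))).
    { replace (2*(c*x0)) with (Ap + Am) by (unfold Ap, Am; ring). apply Z.divide_add_r; auto. }
    destruct (prime_mult p Hp _ _ H3) as [H4|H4].
    - apply Z.divide_pos_le in H4; lia.
    - destruct (prime_mult p Hp _ _ H4); contradiction. }
  destruct (Znumtheory.Zdivide_dec p Am) as [HAm|HAm].
  - assert (HAp : ~ (p | Ap)) by tauto.
    assert (R : rel_prime N Ap) by (unfold N; apply relp_powZ; [lia|]; apply prime_rel_prime; auto).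
    right. split.
    + rewrite I1. intro H. apply HAp. eapply Z.divide_trans; [exact HpN| exact H].
    + apply I2. apply Gauss with Ap. exact Hprod. exact R.
  - assert (R : rel_prime N Am) by (unfold N; apply relp_powZ; [lia|]; apply prime_rel_prime; auto).
    left. split.
    + apply I1. apply Gauss with Am; auto. rewrite Z.mul_comm; auto.
    + rewrite I2. intro H. apply HAm. eapply Z.divide_trans; [exact HpN| exact H].
Qed.
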